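(* Let $p$ be a prime, $k\ge2$, $\varphi\in\mathbb{Z}[x]$ monic and irreducible modulo $p$, $e\ge1$ an integer, $f\in\mathbb{Z}[x]$ with $f\equiv\varphi^e+p\,l\bmod p^k$ for some $l\in\mathbb{Z}[x]$, and $a$ a positive integer with $a\le e/2$. Let $E(y)=f(x)\left(\varphi^{a(k-1)}+\varphi^{a(k-2)}(py)+\cdots+\varphi^a(py)^{k-2}+(py)^{k-1}\right)$ and $R=\mathbb{Z}[x]/\langle p^k,\varphi^{ak}\rangle$. Suppose $y=y_0+py_1+p^2y_2+\cdots+p^{k-1}y_{k-1}\in R$ is a root of $E$ in $R$, where $y_0,\dots,y_{k-1}\in\mathbb{Z}[x]$. Then for every $z\in R$, the element $y_0+py_1+\cdots+p^{k-3}y_{k-3}+p^{k-2}z$ is also a root of $E$ in $R$.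
   Context: A root of $E$ in $R$ is an element $y\in R$ with $E(y)=0$ in $R$, i.e.\ $E(y)\equiv0\bmod\langle p^k,\varphi^{ak}\rangle$. For $k=2$ the sum $y_0+\cdots+p^{k-3}y_{k-3}$ is empty. *)

(* Defs.v *)
From HB Require Import structures.
From mathcomp Require Import all_boot all_order all_algebra.
Set Implicit Arguments. Unset Strict Implicit. Unset Printing Implicit Defensive.
Import Order.TTheory GRing.Theory Num.Theory.
Local Open Scope ring_scope.

Definition poly_mod_p (p : nat) (g : {poly int}) : {poly 'F_p} :=
  map_poly (fun c : int => c%:~R) g.

(* g lies in the ideal <p^k, phi^n> of Z[x], i.e. g = 0 in Z[x]/<p^k, phi^n>. *)
Definition in_ideal2 (p k : nat) (phi : {poly int}) (n : nat) (g : {poly int}) : Prop :=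
  exists u v : {poly int}, g = (p ^ k)%:R * u + phi ^+ n * v.

Definition Epoly (p k a : nat) (phi f y : {poly int}) : {poly int} :=
  f * \sum_(i < k) phi ^+ (a * (k - 1 - i)) * (p%:R * y) ^+ i.

Definition is_root_R (p k a : nat) (phi f y : {poly int}) : Prop :=
  in_ideal2 p k phi (a * k) (Epoly p k a phi f y).

(* Main.v *)
Require Import Defs.
From HB Require Import structures.
From mathcomp Require Import all_boot all_order all_algebra.
From mathcomp Require Import ring.
Import Order.TTheory GRing.Theory Num.Theory.
Local Open Scope ring_scope.

Section S.
Variables (p k : nat) (phi : {poly int}) (n : nat).
Let I := in_ideal2 p k phi n.

Lemma I0 : I 0.
Proof. by exists 0, 0; rewrite !mulr0 addr0. Qed.
Lemma ID x y : I x -> I y -> I (x + y).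
Proof.
move=> [u [v ->]] [u' [v' ->]]; exists (u + u'), (v + v'); ring.
Qed.
Lemma IM c x : I x -> I (c * x).
Proof. move=> [u [v ->]]; exists (c * u), (c * v); ring. Qed.
Lemma IP u : I ((p ^ k)%:R * u).
Proof. by exists u, 0; rewrite mulr0 addr0. Qed.
Lemma IF v : I (phi ^+ n * v).
Proof. by exists 0, v; rewrite mulr0 add0r. Qed.
Lemma Isum m (F : 'I_m -> {poly int}) : (forall i, I (F i)) -> I (\sum_(i < m) F i).
Proof.
move=> H; apply: (big_ind I) => //; [exact: I0 | exact: ID].
Qed.
End S.

Lemma Dpow (P w c d : {poly int}) (m : nat) : c = P ^+ m.+1 * d ->
  forall j, exists q, (P * w + c) ^+ j.+2 - (P * w) ^+ j.+2 = P ^+ m.+2 * q.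
Proof.
move=> ->; elim=> [|j [q IH]].
  exists (2%:R * w * d + P ^+ m * d ^+ 2).
  rewrite !exprS; ring.
exists ((P * w + P ^+ m.+1 * d) * q + d * P ^+ j.+1 * w ^+ j.+2).
have -> : (P * w + P ^+ m.+1 * d) ^+ j.+3 - (P * w) ^+ j.+3 =
  (P * w + P ^+ m.+1 * d) * ((P * w + P ^+ m.+1 * d) ^+ j.+2 - (P * w) ^+ j.+2)
  + P ^+ m.+1 * d * (P * w) ^+ j.+2.
  rewrite [in LHS]exprS [(P * w) ^+ j.+3]exprS; ring.
rewrite IH exprMn !exprS; ring.
Qed.

Lemma key (p m a e : nat) (phi f l g y d : {poly int}) :
  f = phi ^+ e + p%:R * l + (p ^ m.+2)%:R * g -> (a * 2 <= e)%N ->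
  in_ideal2 p m.+2 phi (a * m.+2)
    (Epoly p m.+2 a phi f (y + (p ^ m)%:R * d) - Epoly p m.+2 a phi f y).
Proof.
move=> Hf Hae; rewrite /Epoly -mulrBr -sumrB.
set P : {poly int} := p%:R.
rewrite !big_ord_recl /=.
rewrite !expr0 subrr add0r /bump /= -!mulrBr.
set Rest := \sum_(i < m) _.
rewrite mulrDr; apply: ID.
-
  idtac.
  have -> : (m.+2 - 1 - 1)%N = m by rewrite subn1 subn1.
  have -> : P * (y + (p ^ m)%:R * d - y) = P ^+ m.+1 * d.
    rewrite natrX -/P exprS; ring.
  rewrite Hf natrX -/P.
  have [t ->] : exists t, e = (a * 2 + t)%N by exists (e - a * 2)%N; rewrite subnKC.
  have -> : (phi ^+ (a * 2 + t) + P * l + P ^+ m.+2 * g) * (phi ^+ (a * m) * (P ^+ m.+1 * d))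
    = phi ^+ (a * m.+2) * (phi ^+ t * P ^+ m.+1 * d)
      + P ^+ m.+2 * (l * phi ^+ (a * m) * d + g * phi ^+ (a * m) * P ^+ m.+1 * d).
    have -> : (a * m.+2 = a * 2 + a * m)%N by rewrite -mulnDr add2n.
    rewrite !exprD !exprS; ring.
  by apply: ID; [apply: IF | rewrite -natrX; apply: IP].
- rewrite /Rest mulr_sumr; apply: Isum => i.
  rewrite -mulrBr !add1n.
  have [q Hq] := Dpow P y (P ^+ m.+1 * d) d m (erefl _) i.
  have -> : P * (y + (p ^ m)%:R * d) = P * y + P ^+ m.+1 * d.
    rewrite natrX -/P exprS; ring.
  rewrite Hq.
  have -> : f * (phi ^+ (a * (m.+2 - 1 - i.+2)) * (P ^+ m.+2 * q)) =
     P ^+ m.+2 * (f * phi ^+ (a * (m.+2 - 1 - i.+2)) * q) by ring.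
  by rewrite /P -natrX; apply: IP.
Qed.

Theorem lemma9 (p k e a : nat) (phi f : {poly int}) (ys : nat -> {poly int}) :
  prime p -> (2 <= k)%N ->
  phi \is monic -> irreducible_poly (poly_mod_p p phi) ->
  (1 <= e)%N ->
  (exists l g : {poly int}, f = phi ^+ e + p%:R * l + (p ^ k)%:R * g) ->
  (0 < a)%N -> (a * 2 <= e)%N ->
  is_root_R p k a phi f (\sum_(i < k) (p ^ i)%:R * ys i) ->
  forall z : {poly int},
    is_root_R p k a phi f
      (\sum_(i < k - 2) (p ^ i)%:R * ys i + (p ^ (k - 2))%:R * z).
Proof.
move=> _ hk _ _ _ [l [g Hf]] _ Hae Hr z.
case: k hk Hf Hr => [|[|m]] // _ Hf Hr.
have -> : (m.+2 - 2)%N = m by rewrite subn2.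
set y := \sum_(i < m.+2) (p ^ i)%:R * ys i.
have -> : \sum_(i < m) (p ^ i)%:R * ys i + (p ^ m)%:R * z =
   y + (p ^ m)%:R * (z - ys m - p%:R * ys m.+1).
  rewrite /y !big_ord_recr /= !natrX exprS; ring.
rewrite /is_root_R.
set E1 := Epoly _ _ _ _ _ (y + _).
have -> : E1 = Epoly p m.+2 a phi f y + (E1 - Epoly p m.+2 a phi f y) by ring.
by apply: ID => //; exact: (@key p m a e phi f l g y _ Hf Hae).
Qed.
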